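(* For every simple graph $G$, $\alpha(G)\leq\vartheta^*(G)\leq\vartheta'(G)$.
   Context: Let $G=(V,E)$, $V=\{1,\dots,n\}$, have adjacency matrix $A=[a_{ij}]$ and degrees $d_j$; $\alpha(G)$ is its independence number. For $x\in\mathbb{R}^n$ and symmetric $W=[w_{ij}]\in\mathbb{R}^{n\times n}$ let $L(x,W)=\begin{bmatrix}1&x^\top\\ x&W\end{bmatrix}$ and $\mathrm{diag}(W)=(w_{11},\dots,w_{nn})$. Define $\mathrm{TH}'(G)=\{x\mid \exists$ symmetric $W$ with $\mathrm{diag}(W)=x$, $L(x,W)\succeq 0$, $w_{ij}=0$ for all $\{i,j\}\in E$, and $W\geq 0$ entrywise$\}$ and $\vartheta'(G)=\max\{\mathbf{e}^\top x\mid x\in\mathrm{TH}'(G)\}$. Let $P^*$ be the set of pairs $(x,W)$, $W$ symmetric with $\mathrm{diag}(W)=x$, satisfying for all $i,j\in V$: $w_{ij}\geq 0$; $x_i\geq w_{ij}$; $w_{ij}+1\geq x_i+x_j$; $w_{ij}-x_i+\sum_{k\in V}a_{jk}w_{ik}\geq 0$; $x_j+x_i-w_{ij}-1+\sum_{k\in V}a_{jk}(x_k-w_{ik})\geq 0$; $(d_j+1)(x_i-w_{ij})-\sum_{k\in V}a_{jk}w_{ik}\geq 0$; $(d_j+1)(1+w_{ij}-x_j-x_i)+\sum_{k\in V}a_{jk}(w_{ik}-x_k)\geq 0$. (These are the linearizations, with $x_ix_j\mapsto w_{ij}$, $x_i^2\mapsto x_i$, of products of the constraints $0\le x\le \mathbf{e}$,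 $(A+I)x-\mathbf{e}\ge 0$, $(D-I)(\mathbf{e}-x)-((A+I)x-\mathbf{e})\ge 0$ with $x_i$ and $1-x_i$, $D$ the degree diagonal matrix.) Define $\mathrm{TH}^*(G)=\{x\mid\exists$ symmetric $W$ with $\mathrm{diag}(W)=x$, $L(x,W)\succeq 0$, $(x,W)\in P^*\}$ and $\vartheta^*(G)=\max\{\mathbf{e}^\top x\mid x\in\mathrm{TH}^*(G)\}$. *)

(* Defs.v *)
From HB Require Import structures.
From mathcomp Require Import all_boot all_order all_algebra.
From mathcomp Require Import boolp classical_sets reals.
Set Implicit Arguments. Unset Strict Implicit. Unset Printing Implicit Defensive.
Import Order.TTheory GRing.Theory Num.Theory.
Local Open Scope ring_scope.

Section Theta.
Variables (R : realType) (n : nat) (e : rel 'I_n).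

Definition adjm : 'M[R]_n := \matrix_(i, j) (if e i j then 1 else 0).
Definition degr (j : 'I_n) : R := (#|[set k | e j k]|)%:R.

Definition indep (S : {set 'I_n}) : bool :=
  [forall i in S, forall j in S, ~~ e i j].
Definition alpha : nat := \max_(S : {set 'I_n} | indep S) #|S|.

Definition psd m (M : 'M[R]_m) : Prop :=
  forall v : 'cV[R]_m, 0 <= (v^T *m M *m v) 0 0.

Definition Lmat (x : 'cV[R]_n) (W : 'M[R]_n) : 'M[R]_(1 + n) :=
  block_mx 1 x^T x W.

Definition diag_is (x : 'cV[R]_n) (W : 'M[R]_n) : Prop :=
  forall i, W i i = x i 0.

Definition THp (x : 'cV[R]_n) : Prop :=
  exists W : 'M[R]_n, W^T = W /\ diag_is x W /\ psd (Lmat x W) /\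
    (forall i j, e i j -> W i j = 0) /\ (forall i j, 0 <= W i j).

Definition Pstar (x : 'cV[R]_n) (W : 'M[R]_n) : Prop :=
  forall i j : 'I_n,
  0 <= W i j /\
  W i j <= x i 0 /\
  x i 0 + x j 0 <= W i j + 1 /\
  0 <= W i j - x i 0 + \sum_k adjm j k * W i k /\
  0 <= x j 0 + x i 0 - W i j - 1 + \sum_k adjm j k * (x k 0 - W i k) /\
  0 <= (degr j + 1) * (x i 0 - W i j) - \sum_k adjm j k * W i k /\
  0 <= (degr j + 1) * (1 + W i j - x j 0 - x i 0)
         + \sum_k adjm j k * (W i k - x k 0).

Definition THs (x : 'cV[R]_n) : Prop :=
  exists W : 'M[R]_n, W^T = W /\ diag_is x W /\ psd (Lmat x W) /\ Pstar x W.

Definition esum (x : 'cV[R]_n) : R := \sum_i x i 0.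

(* theta'(G) and theta*(G): max of e^T x over the set (taken as the sup) *)
Definition theta_p : R := sup [set esum x | x in THp].
Definition theta_s : R := sup [set esum x | x in THs].

End Theta.

(* Main.v *)
Require Import Defs.
From HB Require Import structures.
From mathcomp Require Import all_boot all_order all_algebra.
From mathcomp Require Import boolp classical_sets reals.
From mathcomp Require Import ring lra.
Import Order.TTheory GRing.Theory Num.Theory.
Local Open Scope ring_scope.
Lemma psd_bound (R : realType) (n : nat) (x : 'cV[R]_n) (W : 'M[R]_n) :
  diag_is x W -> psd (Lmat x W) -> forall i, x i 0 - x i 0 ^+ 2 >= 0.
Proof.
move=> hd hp i.
pose a : 'cV[R]_1 := const_mx (- x i 0).
have := hp (col_mx a (delta_mx i 0)).
rewrite /Lmat tr_col_mx mul_row_block mul_row_col trmx_delta.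
rewrite mulmx1 !mulmxDl -!rowE -[(a^T *m x^T) *m _]mulmxA -!colE.
rewrite !mxE !big_ord1 !mxE hd.
have -> : (ord0 : 'I_1) = 0 by apply: val_inj. move=> h; nra.
Qed.
Lemma THs_THp (R : realType) (n : nat) (e : rel 'I_n) (x : 'cV[R]_n) : THs e x -> THp e x.
Proof.
case=> W [hs [hd [hp hP]]]; exists W; do 3 split => //.
split; last by move=> i j; case: (hP i j).
move=> i j eij.
have [_ [_ [_ [_ [_ [h6 _]]]]]] := hP i i.
rewrite hd subrr mulr0 sub0r oppr_ge0 in h6.
have h0 : forall k, 0 <= adjm R e i k * W i k.
  move=> k; rewrite /adjm mxE; case: (e i k); rewrite ?mul1r ?mul0r //.
  by case: (hP i k).
rewrite (bigD1 j) //= /adjm mxE eij mul1r in h6.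
have : 0 <= \sum_(k < n | k != j) adjm R e i k * W i k by apply: sumr_ge0.
case: (hP i j) => h _.
move=> h'; apply/eqP; rewrite eq_le h andbT.
by apply: le_trans h6; rewrite lerDl.
Qed.
Lemma max_indep (n : nat) (e : rel 'I_n) (e_sym : symmetric e) (e_irr : irreflexive e) :
  exists S, [/\ indep e S, #|S| = alpha e & forall j, j \notin S -> exists2 k, k \in S & e j k].
Proof.
have [|S HS Hm] := @eq_bigmax_cond _ (indep e) (fun S => #|S|).
  apply/card_gt0P; exists finset.set0; rewrite unfold_in /indep.
  by apply/forallP => i; rewrite inE.
have HS' : indep e S by move: HS; rewrite unfold_in.
have Ha : alpha e = #|S| by rewrite /alpha -Hm; apply: eq_bigl => T; rewrite unfold_in.
exists S; split => //.
move=> j jS; case: (boolP [exists k in S, e j k]) => [/exists_inP // | hno0].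
have hno : forall k, k \in S -> ~~ e j k.
  by move=> k kS; apply/negP => ejk; move/negP: hno0; apply; apply/exists_inP; exists k.
exfalso.
have Hi : indep e (j |: S).
  apply/forallP => a; apply/implyP; rewrite in_setU1 => /orP Hxa.
  apply/forallP => b; apply/implyP; rewrite in_setU1 => /orP Hb.
  case: Hxa => [/eqP -> | aS]; case: Hb => [/eqP -> | bS].
  - by rewrite e_irr.
  - exact: hno.
  - by rewrite e_sym; exact: hno.
  - by move/forallP: HS' => /(_ a) /implyP /(_ aS) /forallP /(_ b) /implyP /(_ bS).
have := @leq_bigmax_cond _ (indep e) (fun S => #|S|) _ Hi.
rewrite -/(alpha e) Ha cardsU1 jS /=.
by rewrite add1n ltnn.
Qed.
Lemma sum_adj (R : realType) (n : nat) (e : rel 'I_n) j :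
  \sum_k adjm R e j k = degr R e j.
Proof.
rewrite /degr /adjm.
under eq_bigr do rewrite mxE.
rewrite -big_mkcond /=.
rewrite (eq_bigl (fun k => k \in [set k | e j k])); last by move=> k; rewrite inE.
by rewrite sumr_const.
Qed.

Lemma ind_THs (R : realType) (n : nat) (e : rel 'I_n) (S : {set 'I_n}) :
  indep e S -> (forall j, j \notin S -> exists2 k, k \in S & e j k) ->
  THs e (\col_i ((i \in S)%:R : R)).
Proof.
move=> HS Hmax.
set x := \col_i ((i \in S)%:R : R).
have xE : forall i, x i 0 = (i \in S)%:R by move=> i; rewrite mxE.
have xx : forall i, x i 0 * x i 0 = x i 0 by move=> i; rewrite xE; case: (i \in S); rewrite ?mul1r ?mul0r.
exists (x *m x^T).
have WE : forall i j, (x *m x^T) i j = x i 0 * x j 0.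
  by move=> i j; rewrite mxE big_ord1 [x^T _ _]mxE.
split; first by rewrite trmx_mul trmxK.
split; first by move=> i; rewrite WE xx.
split.
  have -> : Lmat x (x *m x^T) = col_mx 1 x *m (col_mx 1 x)^T.
    by rewrite tr_col_mx mul_col_row trmx1 !mulmx1 mul1mx.
  move=> v; rewrite -!mulmxA mulmxA -{1}(trmxK (col_mx 1 x)) -trmx_mul.
  rewrite mxE big_ord1 mxE; exact: sqr_ge0.
pose D j := \sum_k adjm R e j k * x k 0.
have D0 : forall j, 0 <= D j.
  move=> j; apply: sumr_ge0 => k _; rewrite /adjm mxE xE.
  by case: (e j k); case: (k \in S); rewrite ?mul1r ?mul0r.
have h1 : forall j, 1 <= x j 0 + D j.
  move=> j; case: (boolP (j \in S)) => jS.
    by rewrite xE jS lerDl.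
  have [k kS ejk] := Hmax j jS.
  rewrite xE (negbTE jS) add0r /D (bigD1 k) //= /adjm mxE ejk xE kS mul1r lerDl.
  apply: sumr_ge0 => l _; rewrite mxE xE.
  by case: (e j l); case: (l \in S); rewrite ?mul1r ?mul0r.
have h2 : forall j, D j <= (degr R e j + 1) * (1 - x j 0).
  move=> j; case: (boolP (j \in S)) => jS.
    rewrite xE jS subrr mulr0 /D big1 // => k _; rewrite /adjm mxE xE.
    case: (boolP (k \in S)) => kS; last by rewrite mulr0.
    have : ~~ e j k by move/forallP: HS => /(_ j) /implyP /(_ jS) /forallP /(_ k) /implyP /(_ kS).
    by move/negbTE => ->; rewrite mul0r.
  rewrite xE (negbTE jS) subr0 mulr1 -sum_adj.
  apply: le_trans (_ : \sum_k adjm R e j k <= _); last by rewrite lerDl.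
  apply: ler_sum => k _; rewrite /adjm mxE xE.
  by case: (e j k); case: (k \in S); rewrite ?mul1r ?mul0r.
have deg0 : forall j, 0 <= degr R e j by move=> j; rewrite /degr ler0n.
move=> i j.
have s1 : \sum_k adjm R e j k * (x *m x^T) i k = x i 0 * D j.
  rewrite /D mulr_sumr; apply: eq_bigr => k _; rewrite WE; ring.
have s2 : \sum_k adjm R e j k * (x k 0 - (x *m x^T) i k) = (1 - x i 0) * D j.
  rewrite /D mulr_sumr; apply: eq_bigr => k _; rewrite WE; ring.
have s3 : \sum_k adjm R e j k * ((x *m x^T) i k - x k 0) = - ((1 - x i 0) * D j).
  rewrite /D -mulrN -sumrN mulr_sumr; apply: eq_bigr => k _; rewrite WE; ring.
rewrite s1 s2 s3 WE.
have := h1 j; have := h2 j; have := D0 j; have := deg0 j.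
rewrite !xE; case: (i \in S); case: (j \in S) => /=; move=> *; repeat split; nra.
Qed.

Lemma THp_bound (R : realType) (n : nat) (e : rel 'I_n) (x : 'cV[R]_n) :
  THp e x -> esum x <= n%:R.
Proof.
case=> W [_ [hd [hp [_ h0]]]].
rewrite /esum -[n in n%:R]card_ord -sumr_const.
apply: ler_sum => i _.
have := @psd_bound _ _ _ _ hd hp i; have := h0 i i; rewrite hd => *; nra.
Qed.

Theorem theorem5 (R : realType) (n : nat) (e : rel 'I_n)
  (e_sym : symmetric e) (e_irr : irreflexive e) :
  (alpha e)%:R <= theta_s R e /\ theta_s R e <= theta_p R e.
Proof.
have [S [HS Ha Hmax]] := @max_indep _ _ e_sym e_irr.
have Hx := @ind_THs R n e S HS Hmax.
set x := \col_i ((i \in S)%:R : R) in Hx.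
have ubp : has_ubound [set esum y | y in @THp R n e].
  by exists n%:R => z [y Hy <-]; exact: (@THp_bound _ _ _ _ Hy).
have ubs : has_ubound [set esum y | y in @THs R n e].
  by exists n%:R => z [y Hy <-]; apply: THp_bound; exact: (@THs_THp _ _ _ _ Hy).
split.
  have -> : (alpha e)%:R = esum x.
    rewrite /esum -Ha -sum1_card natr_sum big_mkcond /=.
    by apply: eq_bigr => i _; rewrite mxE; case: (i \in S).
  by apply: ub_le_sup => //; exists x.
apply: ge_sup; first by exists (esum x), x.
move=> z [y Hy <-]; apply: ub_le_sup => //; exists y => //; exact: THs_THp.
Qed.
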